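(* Let $\Gamma$ be a partition of $[n]$ into $k$ nonempty sets, $n_{\min}:=\min_{S\in\Gamma}|S|$, $n_{\max}:=\max_{S\in\Gamma}|S|$, let $p\in(0,1]$, and let $W\subseteq[n]$ be random, containing each index independently with probability $p$; for $S\in\Gamma$ put $S':=S\cap W$. Fix $S,T\in\Gamma$ with $S\ne T$, let $\epsilon\in(0,1)$, and suppose $pn_{\min}\ge\frac{104}3\big(\frac{n_{\max}}{n_{\min}}\big)^2\log\frac6\epsilon$. Then with probability at least $1-\epsilon$, \[\Big|p\Big(\frac1{|S'|}+\frac1{|T'|}\Big)-\Big(\frac1{|S|}+\frac1{|T|}\Big)\Big|<\sqrt{\frac{104}3\cdot\frac{\log(6/\epsilon)}{pn_{\min}^3}}.\]
   Context: Logarithms are natural. *)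

(* Defs.v *)
From HB Require Import structures.
From mathcomp Require Import all_boot all_order all_algebra.
From mathcomp Require Import all_classical all_reals exp.
Set Implicit Arguments. Unset Strict Implicit. Unset Printing Implicit Defensive.
Import Order.TTheory GRing.Theory Num.Theory.
Local Open Scope ring_scope.

Definition binom_prob (R : realType) (n : nat) (p : R)
  (E : {set 'I_n} -> bool) : R :=
  \sum_(W : {set 'I_n} | E W) p ^+ #|W| * (1 - p) ^+ (n - #|W|).

Definition nmin (n : nat) (Gamma : {set {set 'I_n}}) : nat :=
  \big[minn/n]_(S in Gamma) #|S|.

Definition nmax (n : nat) (Gamma : {set {set 'I_n}}) : nat :=
  \max_(S in Gamma) #|S|.

Definition lemma12_event (R : realType) (n : nat) (p bound : R)
  (S T W : {set 'I_n}) : bool :=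
  [&& S :&: W != finset.set0, T :&: W != finset.set0 &
   `| p * ((#|S :&: W|%:R)^-1 + (#|T :&: W|%:R)^-1)
      - ((#|S|%:R)^-1 + (#|T|%:R)^-1) | < bound].

(* Main.v *)
Require Import Defs.
From HB Require Import structures.
From mathcomp Require Import all_boot all_order all_algebra.
From mathcomp Require Import all_classical all_reals exp.
From mathcomp Require Import sequences ring lra.
Import Order.TTheory GRing.Theory Num.Theory.
Local Open Scope ring_scope.
Section Comb.
Variables (R : realType) (n : nat) (p : R).

Lemma sum_prod_sets (h : 'I_n -> bool -> R) :
  \sum_(W : {set 'I_n}) \prod_i h i (i \in W) = \prod_i (h i true + h i false).
Proof.
transitivity (\prod_i \sum_(b : bool) h i b).
  2: by apply: eq_bigr => i _; rewrite big_bool.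
rewrite bigA_distr_bigA.
rewrite (reindex (fun f : {ffun 'I_n -> bool} => [set i | f i])) /=.
  by apply: eq_bigr => f _; apply: eq_bigr => i _; rewrite inE.
exists (fun W : {set 'I_n} => [ffun i => i \in W]) => [f _|W _].
  by apply/ffunP => i; rewrite ffunE inE.
by apply/setP => i; rewrite inE ffunE.
Qed.

Definition wt (W : {set 'I_n}) : R := p ^+ #|W| * (1 - p) ^+ (n - #|W|).

Lemma wt_prod W : wt W = \prod_i (if i \in W then p else 1 - p).
Proof.
rewrite (bigID (mem W)) /=.
rewrite (eq_bigr (fun _ => p)); last by move=> i ->.
rewrite [X in _ * X](eq_bigr (fun _ => 1 - p)); last by move=> i /negbTE ->.
rewrite !prodr_const /wt; congr (_ * _ ^+ _).
have := cardsC W; rewrite card_ord => h.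
have -> : #|[pred i | i \notin W]| = #|~: W| by apply: eq_card => i; rewrite !inE.
by rewrite -[in RHS](addKn #|W| #|~: W|) h.
Qed.

Lemma mgf (A : {set 'I_n}) c :
  \sum_W wt W * expR (c * #|A :&: W|%:R) = (1 - p + p * expR c) ^+ #|A|.
Proof.
pose h := fun (i : 'I_n) (b : bool) => if b then p * (if i \in A then expR c else 1) else 1 - p.
transitivity (\sum_(W : {set 'I_n}) \prod_i h i (i \in W)).
  apply: eq_bigr => W _; rewrite wt_prod mulrC expRM_natr -prodr_const.
  rewrite (big_mkcond (fun i => i \in A :&: W)) -big_split /=.
  apply: eq_bigr => i _; rewrite inE /h.
  by case: (i \in W); case: (i \in A) => /=; rewrite ?mul1r ?mulr1 // mulrC.
rewrite (sum_prod_sets h) -prodr_const.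
rewrite (big_mkcond (fun i => i \in A)).
apply: eq_bigr => i _; rewrite /h; case: (i \in A) => //; first by rewrite addrC.
by rewrite mulr1 addrC subrK.
Qed.


Lemma tail (A : {set 'I_n}) (K c : R) : 0 <= p -> p <= 1 ->
  \sum_W wt W * expR (K + c * #|A :&: W|%:R)
    <= expR (K + #|A|%:R * (p * (expR c - 1))).
Proof.
move=> p0 p1.
rewrite (eq_bigr (fun W => expR K * (wt W * expR (c * #|A :&: W|%:R))));
  last by move=> W _; rewrite expRD mulrCA.
rewrite -big_distrr /= mgf expRD ler_wpM2l ?expR_ge0 // expRM_natl.
have he := expR_ge0 c.
apply: lerXn2r; rewrite ?nnegrE ?expR_ge0 //; first by nra.
have := expR_ge1Dx (p * (expR c - 1)); lra.
Qed.

Lemma wt_ge0 W : 0 <= p -> p <= 1 -> 0 <= wt W.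
Proof. by move=> p0 p1; rewrite /wt mulr_ge0 // exprn_ge0 // subr_ge0. Qed.

Lemma wt_sum : \sum_W wt W = 1.
Proof.
have := mgf finset.set0 0; rewrite cards0 expr0 => <-.
by apply: eq_bigr => W _; rewrite finset.set0I cards0 mulr0 expR0 mulr1.
Qed.

End Comb.

Lemma bigmin_le (I : finType) (P : pred I) (F : I -> nat) (i0 : I) x :
  P i0 -> (\big[minn/x]_(i | P i) F i <= F i0)%N.
Proof.
move=> Pi0; rewrite -big_filter.
have : i0 \in [seq i <- index_enum I | P i] by rewrite mem_filter Pi0 mem_index_enum.
elim: [seq i <- index_enum I | P i] => // y s IH.
rewrite in_cons big_cons => /orP [/eqP <-|/IH h]; first exact: geq_minl.
exact: leq_trans (geq_minr _ _) h.
Qed.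

Lemma bigmin_ge (I : finType) (P : pred I) (F : I -> nat) x k :
  (forall i, P i -> k <= F i)%N -> (k <= x)%N ->
  (k <= \big[minn/x]_(i | P i) F i)%N.
Proof.
move=> hF hx; elim/big_ind: _ => // a b ha hb.
by rewrite leq_min ha hb.
Qed.
Section An.
Variable R : realType.

Lemma exp_up (u : R) : 0 <= u -> u <= 1/3 -> expR u <= 1 + u + 3/2 * u^+2.
Proof.
move=> u0 u3.
have h1 := expR_ge1Dx (- u).
have hp : 0 < 1 - u by lra.
have -> : expR u = (expR (- u))^-1 by rewrite expRN invrK.
apply: (@le_trans _ _ (1 - u)^-1).
  by rewrite lef_pV2 ?posrE ?expR_gt0 //; lra.
rewrite -(ler_pM2l hp) mulfV ?gt_eqF //.
nra.
Qed.

Lemma exp_down (t : R) : 0 <= t -> expR (- t) <= 1 - t + 3/4 * t^+2.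
Proof.
move=> t0.
have h1 := expR_ge1Dx (t / 2).
have he : expR t = expR (t/2) ^+ 2 by rewrite -expRM_natl; congr expR; field.
have hy : 0 < 1 + t/2 by lra.
have h2 : (1 + t/2)^+2 <= expR t.
  by rewrite he; apply: lerXn2r => //; rewrite ?nnegrE ?expR_ge0 //; lra.
rewrite expRN.
apply: (@le_trans _ _ ((1 + t/2)^+2)^-1).
  by rewrite lef_pV2 ?posrE ?expR_gt0 ?exprn_gt0.
have hq : 0 < (1 + t/2)^+2 by rewrite exprn_gt0.
rewrite -(ler_pM2l hq) mulfV ?gt_eqF //.
nra.
Qed.

Lemma single (a m x p u : R) : 0 < p -> 0 < m -> m <= a -> 0 <= u ->
  u ^+ 2 <= 3/104 ->
  (1 - 7/4 * u) * (p * a) < x -> x < (1 + 5/2 * u) * (p * a) ->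
  0 < x /\ `| p / x - a^-1 | < 5/2 * u / m.
Proof.
move=> p0 m0 ma u0 u2 hl hu.
have u5 : u <= 1/5 by nra.
have pa : 0 < p * a by apply: mulr_gt0 => //; lra.
have x0 : 0 < x by nra.
split => //.
have a0 : 0 < a by lra.
have -> : p / x - a^-1 = (p * a - x) / (a * x) by field; rewrite ?gt_eqF //; lra.
rewrite normrM (gtr0_norm (x := (a * x)^-1)); last by rewrite invr_gt0 mulr_gt0.
rewrite ltr_pdivrMr ?mulr_gt0 //.
have -> : 5 / 2 * u / m * (a * x) = 5 / 2 * u * x * (a / m) by field; lra.
have am : 1 <= a / m by rewrite ler_pdivlMr // mul1r.
have hux : 0 <= 5 / 2 * u * x by nra.
rewrite ltr_norml; apply/andP; split.
  have : 5/2 * u * x <= 5 / 2 * u * x * (a / m) by nra.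
  nra.
have : 5/2 * u * x <= 5 / 2 * u * x * (a / m) by nra.
nra.
Qed.

End An.
Theorem lemma12 (R : realType) (n k : nat) (Gamma : {set {set 'I_n}})
  (p eps : R) (S T : {set 'I_n}) :
  finset.partition Gamma [set: 'I_n] -> #|Gamma| = k ->
  0 < p -> p <= 1 ->
  S \in Gamma -> T \in Gamma -> S != T ->
  0 < eps -> eps < 1 ->
  p * (nmin Gamma)%:R >=
    104 / 3 * ((nmax Gamma)%:R / (nmin Gamma)%:R) ^+ 2 * ln (6 / eps) ->
  binom_prob p
    (lemma12_event p
       (Num.sqrt (104 / 3 * (ln (6 / eps) / (p * (nmin Gamma)%:R ^+ 3))))
       S T)
  >= 1 - eps.
Proof.
move=> part _ p0 p1 SG TG ST e0 e1 hyp.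
have p0' : 0 <= p by exact: ltW.
case/and3P: part => _ _ h0.
have cardA : forall A, A \in Gamma -> (0 < #|A|)%N.
  move=> A AG; rewrite card_gt0; apply/negP => /eqP eA.
  by move: AG; rewrite eA (negbTE h0).
have nS : (1 <= n)%N.
  by apply: leq_trans (cardA S SG) _; rewrite -[X in (_ <= X)%N]card_ord max_card.
have mA : forall A, A \in Gamma -> (nmin Gamma <= #|A|)%N.
  by move=> A AG; rewrite /nmin bigmin_le.
have m1 : (1 <= nmin Gamma)%N by rewrite /nmin bigmin_ge.
have MA : forall A, A \in Gamma -> (#|A| <= nmax Gamma)%N.
  by move=> A AG; rewrite /nmax (@leq_bigmax_cond _ (fun B => B \in Gamma) (fun B => #|B|) A AG).
set m := nmin Gamma in hyp mA m1 *.
set M := nmax Gamma in hyp MA *.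
set L := ln (6 / eps).
have L0 : 0 < L by apply: ln_gt0; rewrite ltr_pdivlMr //; lra.
have mR : 1 <= m%:R :> R by rewrite ler1n.
have mM : m%:R <= M%:R :> R by rewrite ler_nat (leq_trans (mA S SG) (MA S SG)).
have Mm : 1 <= M%:R / m%:R :> R by rewrite ler_pdivlMr ?mul1r //; lra.
have pm : 104 / 3 * L <= p * m%:R.
  apply: (le_trans _ hyp); rewrite -/L expr2.
  have hx : 1 <= M%:R / m%:R * (M%:R / m%:R) :> R by nra.
  have hx2 : 0 <= M%:R / m%:R * (M%:R / m%:R) - 1 :> R by lra.
  have := mulr_ge0 (ltW L0) hx2. nra.
have pm0 : 0 < p * m%:R by apply: mulr_gt0 => //; lra.
set u := Num.sqrt (L / (p * m%:R)).
have u0 : 0 < u by rewrite sqrtr_gt0 divr_gt0.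
have u2 : u ^+ 2 = L / (p * m%:R) by rewrite sqr_sqrtr // ltW // divr_gt0.
have pmu : p * m%:R * u ^+ 2 = L by rewrite u2; field; lra.
have u2b : u ^+ 2 <= 3 / 104.
  rewrite u2 ler_pdivrMr //; lra.
have u3 : u <= 1/3 by nra.
have Bge : 5 * u / m%:R <= Num.sqrt (104 / 3 * (L / (p * m%:R ^+ 3))).
  rewrite -[X in X <= _]ger0_norm; last by apply: divr_ge0; lra.
  rewrite -sqrtr_sqr; apply: ler_wsqrtr.
  have -> : (5 * u / m%:R) ^+ 2 = 25 * (L / (p * m%:R ^+ 3)).
    by rewrite expr_div_n exprMn u2; field; lra.
  apply: ler_wpM2r; last lra.
  by apply: divr_ge0; [lra | apply: mulr_ge0; [lra | apply: exprn_ge0; lra]].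
pose w := @wt R n p.
pose a (A : {set 'I_n}) : R := #|A|%:R.
pose gu (A W : {set 'I_n}) :=
  expR (- (u * (1 + 5/2*u) * (p * a A)) + u * #|A :&: W|%:R).
pose gl (A W : {set 'I_n}) :=
  expR (7/6*u*((1 - 7/4*u)*(p * a A)) + (-(7/6*u)) * #|A :&: W|%:R).
pose g W := gu S W + gl S W + gu T W + gl T W.
set E := lemma12_event _ _ _ _.
have mpos : 0 < m%:R :> R by lra.
have good : forall A W, A \in Gamma -> gu A W < 1 -> gl A W < 1 ->
    0 < (#|A :&: W|%:R : R) /\
    `| p / #|A :&: W|%:R - (a A)^-1 | < 5/2 * u / m%:R.
  move=> A W AG hu hl.
  rewrite /gu /gl !expR_lt1 in hu hl.
  apply: single => //.
  - by rewrite /a ler_nat mA.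
  - exact: ltW.
  - nra.
  - nra.
have key : forall W, ~~ E W -> 1 <= g W.
  move=> W; apply: contraNT; rewrite -ltNge => hg.
  have h1 := expR_ge0 (- (u * (1 + 5/2*u) * (p * a S)) + u * #|S :&: W|%:R).
  have h2 := expR_ge0 (7/6*u*((1 - 7/4*u)*(p * a S)) + (-(7/6*u)) * #|S :&: W|%:R).
  have h3 := expR_ge0 (- (u * (1 + 5/2*u) * (p * a T)) + u * #|T :&: W|%:R).
  have h4 := expR_ge0 (7/6*u*((1 - 7/4*u)*(p * a T)) + (-(7/6*u)) * #|T :&: W|%:R).
  rewrite /g /gu /gl in hg.
  have [xS hS] := good S W SG ltac:(rewrite /gu; lra) ltac:(rewrite /gl; lra).
  have [xT hT] := good T W TG ltac:(rewrite /gu; lra) ltac:(rewrite /gl; lra).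
  rewrite /E /lemma12_event; apply/and3P; split.
  - by rewrite -card_gt0 -(ltr0n R).
  - by rewrite -card_gt0 -(ltr0n R).
  apply: (lt_le_trans _ Bge).
  have -> : p * ((#|S :&: W|%:R)^-1 + (#|T :&: W|%:R)^-1) - ((#|S|%:R)^-1 + (#|T|%:R)^-1)
     = (p / #|S :&: W|%:R - (a S)^-1) + (p / #|T :&: W|%:R - (a T)^-1) :> R.
    by rewrite /a; ring.
  apply: (le_lt_trans (ler_normD _ _)).
  have -> : 5 * u / m%:R = 5/2 * u / m%:R + 5/2 * u / m%:R :> R by field; lra.
  lra.
have eL : expR (- L) = eps / 6.
  by rewrite expRN lnK ?invf_div // posrE divr_gt0.
have tails : forall A, A \in Gamma ->
    \sum_W w W * gu A W <= eps / 6 /\ \sum_W w W * gl A W <= eps / 6.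
  move=> A AG.
  have hma : p * m%:R <= p * a A by rewrite ler_pM2l // /a ler_nat mA.
  have hu2 : p * m%:R * u ^+ 2 <= p * a A * u ^+ 2 by rewrite ler_wpM2r // exprn_ge0 // ltW.
  have pa0 : 0 <= p * a A by lra.
  split.
    apply: le_trans (tail R n p A _ _ p0' p1) _; rewrite -eL ler_expR.
    have eu := @exp_up R u (ltW u0) u3.
    have e2 : expR u - 1 - u - 5/2 * u ^+ 2 <= - u ^+ 2 by lra.
    have := ler_wpM2l pa0 e2.
    rewrite /a in hma hu2 pa0 * => hh.
    rewrite -pmu; nra.
  apply: le_trans (tail R n p A _ _ p0' p1) _; rewrite -eL ler_expR.
  have eu := @exp_down R (7/6 * u) ltac:(lra).
  have e2 : expR (- (7/6 * u)) - 1 + 7/6 * u * (1 - 7/4 * u) <= - u ^+ 2.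
    rewrite expr2 in eu *; nra.
  have := ler_wpM2l pa0 e2.
  rewrite /a in hma hu2 pa0 * => hh.
  rewrite -pmu; nra.
have tot := wt_sum R n p.
rewrite (bigID E) /= in tot.
have hb : \sum_(W | ~~ E W) w W <= eps.
  apply: (@le_trans _ _ (\sum_W w W * g W)).
    rewrite [X in _ <= X](bigID (fun W => ~~ E W)) /=.
    have hg0 : forall W, 0 <= g W.
      by move=> W; rewrite /g /gu /gl !addr_ge0 ?expR_ge0.
    have hA : \sum_(W | ~~ E W) w W <= \sum_(W | ~~ E W) w W * g W.
      apply: ler_sum => W nE; rewrite -[leLHS]mulr1 ler_wpM2l ?key //.
      exact: wt_ge0.
    have hB : 0 <= \sum_(W | ~~ ~~ E W) w W * g W.
      by apply: sumr_ge0 => W _; rewrite mulr_ge0 // wt_ge0.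
    lra.
  rewrite /g; under eq_bigr do rewrite !mulrDr; rewrite !big_split /=.
  have [hS1 hS2] := tails S SG.
  have [hT1 hT2] := tails T TG.
  lra.
rewrite /binom_prob -/w.
lra.
Qed.
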